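(* Let $\mathcal{A}$ and $\mathcal{B}$ be sharp qubit observables, with a priori probabilities $\eta$ for $\mathcal{A}$ and $1-\eta$ for $\mathcal{B}$, where $\eta\in[0,1]$, and let $P\in[0,1]$. The following are equivalent: (i) there is a unit vector $\psi\in\mathbb{C}^2\otimes\mathbb{C}^2$ such that $\langle\psi|\mathcal{B}_1\otimes\mathcal{B}_1+\mathcal{B}_2\otimes\mathcal{B}_2|\psi\rangle=0$ and $\eta\langle\psi|\mathcal{A}_1\otimes\mathcal{A}_1+\mathcal{A}_2\otimes\mathcal{A}_2|\psi\rangle=P$ (i.e. the result ''same outcomes'' leads to the conclusion that the apparatus is $\mathcal{A}$, with success probability $P$); (ii) there is a unit vector $\psi'\in\mathbb{C}^2\otimes\mathbb{C}^2$ such that $\langle\psi'|\mathcal{B}_1\otimes\mathcal{B}_2+\mathcal{B}_2\otimes\mathcal{B}_1|\psi'\rangle=0$ and $\eta\langle\psi'|\mathcal{A}_1\otimes\mathcal{A}_2+\mathcal{A}_2\otimes\mathcal{A}_1|\psi'\rangle=P$ (i.e. the result ''different outcomes'' leads to the conclusion that the apparatus is $\mathcal{A}$, with success probability $P$).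
   Context: A sharp qubit observable is given by a unit vector $\vec a\in\mathbb{R}^3$ and has two outcomes with effects $\mathcal{A}_1=\frac12(I+\vec a\cdot\vec\sigma)$, $\mathcal{A}_2=\frac12(I-\vec a\cdot\vec\sigma)$ on $\mathbb{C}^2$, where $\vec\sigma=(\sigma_x,\sigma_y,\sigma_z)$ are the Pauli matrices; similarly $\mathcal{B}_{1,2}=\frac12(I\pm\vec b\cdot\vec\sigma)$ with $\vec b$ a unit vector. In a two-shot experiment, the unknown apparatus (either $\mathcal{A}$ or $\mathcal{B}$, labels of outcomes unknown) is applied to each half of a probe state on $\mathbb{C}^2\otimes\mathbb{C}^2$, and one only observes whether the two outcomes are the same or different. *)

(* Defs.v *)
From HB Require Import structures.
From mathcomp Require Import all_boot all_order all_algebra.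
From mathcomp Require Import complex mxtens.
Set Implicit Arguments. Unset Strict Implicit. Unset Printing Implicit Defensive.
Import Order.TTheory GRing.Theory Num.Theory.
Local Open Scope ring_scope.
Local Open Scope complex_scope.

Section Qubit.
Variable R : rcfType.
Local Notation C := R[i].

Definition unit3 (a : 'rV[R]_3) : Prop := \sum_(k < 3) a 0 k ^+ 2 = 1.

Definition sigma_x : 'M[C]_2 := \matrix_(i < 2, j < 2) (if i == j then 0 else 1).
Definition sigma_y : 'M[C]_2 :=
  \matrix_(i < 2, j < 2)
    (if i == j then 0 else if (i : nat) == 0%N then - 'i else 'i).
Definition sigma_z : 'M[C]_2 :=
  \matrix_(i < 2, j < 2) (if i == j then (if (i : nat) == 0%N then 1 else -1) else 0).

Definition adots (a : 'rV[R]_3) : 'M[C]_2 :=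
  (a 0 0)%:C *: sigma_x + (a 0 1)%:C *: sigma_y + (a 0 2)%:C *: sigma_z.

(* the two effects of the sharp observable given by a:
   eff a true = (I + a.sigma)/2 (outcome 1), eff a false = (I - a.sigma)/2 (outcome 2) *)
Definition eff (a : 'rV[R]_3) (b : bool) : 'M[C]_2 :=
  2^-1 *: (1%:M + (if b then 1 else -1) *: adots a).

Definition cadj n (psi : 'cV[C]_n) : 'rV[C]_n := (map_mx conjc psi)^T.
Definition is_unit_vec n (psi : 'cV[C]_n) : Prop := (cadj psi *m psi) 0 0 = 1.
Definition expect n (psi : 'cV[C]_n) (M : 'M[C]_n) : C := (cadj psi *m M *m psi) 0 0.

Definition same_eff (a : 'rV[R]_3) : 'M[C]_(2 * 2) :=
  eff a true *t eff a true + eff a false *t eff a false.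
Definition diff_eff (a : 'rV[R]_3) : 'M[C]_(2 * 2) :=
  eff a true *t eff a false + eff a false *t eff a true.
End Qubit.

(* Main.v *)
Require Import Defs.
From HB Require Import structures.
From mathcomp Require Import all_boot all_order all_algebra.
From mathcomp Require Import complex mxtens.
From mathcomp Require Import ring lra.
Import Order.TTheory GRing.Theory Num.Theory.
Local Open Scope ring_scope.
Local Open Scope complex_scope.

Section S.
Variable R : rcfType.
Local Notation C := R[i].
Definition dot3 (a b : 'rV[R]_3) := a 0 0 * b 0 0 + a 0 1 * b 0 1 + a 0 2 * b 0 2.

Lemma adotsE (a : 'rV[R]_3) : adots a = \matrix_(i < 2, j < 2)
  (if (i:nat) == 0%N then (if (j:nat) == 0%N then a 0 2 +i* 0 else a 0 0 +i* (- a 0 1))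
   else (if (j:nat) == 0%N then a 0 0 +i* a 0 1 else (- a 0 2) +i* 0)).
Proof.
apply/matrixP => i j; rewrite !mxE.
case: i => [[|[|i]] Hi] //; case: j => [[|[|j]] Hj] //=; simpc; apply/eqP; rewrite eq_complex /=;
  by rewrite !eqxx.
Qed.

Lemma sum2 (F : 'I_2 -> C) : \sum_(k < 2) F k = F 0 + F 1.
Proof. rewrite big_ord_recl big_ord1; congr (_ + F _); exact: val_inj. Qed.

Ltac cc := simpc; apply/eqP; rewrite eq_complex /=; apply/andP; split; apply/eqP; ring.

Lemma adots_sq (n : 'rV[R]_3) : adots n *m adots n = (dot3 n n)%:C *: 1%:M.
Proof.
rewrite !adotsE; apply/matrixP => i j; rewrite !mxE !sum2 !mxE /dot3.
case: i => [[|[|i]] Hi] //; case: j => [[|[|j]] Hj] //=; cc. Qed.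

Lemma adots_sand (n x : 'rV[R]_3) : adots n *m adots x *m adots n =
   (2 * dot3 n x)%:C *: adots n - (dot3 n n)%:C *: adots x.
Proof.
rewrite !adotsE; apply/matrixP => i j; rewrite !mxE !sum2 !mxE !sum2 !mxE /dot3.
case: i => [[|[|i]] Hi] //; case: j => [[|[|j]] Hj] //=; cc. Qed.

Lemma adots_adj (n : 'rV[R]_3) : (map_mx conjc (adots n))^T = adots n.
Proof.
rewrite !adotsE; apply/matrixP => i j; rewrite !mxE.
case: i => [[|[|i]] Hi] //; case: j => [[|[|j]] Hj] //=; cc. Qed.

Lemma eff_sand (n x : 'rV[R]_3) b : dot3 n n = 1 -> dot3 n x = 0 ->
  adots n *m eff x b *m adots n = eff x (~~ b).
Proof.
move=> Hn Hx; have := adots_sand n x; have := adots_sq n.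
rewrite /eff; set V := adots n; set A := adots x => Hsq Hsa; clearbody V A.
rewrite -scalemxAr -scalemxAl mulmxDr mulmxDl mulmx1.
rewrite -scalemxAr -scalemxAl Hsq Hsa Hn Hx mulr0 scale0r sub0r scale1r.
by case: b => /=; rewrite ?scaleNr ?scale1r ?scaleN1r ?opprK.
Qed.

Lemma tens11 : (1%:M : 'M[C]_2) *t (1%:M : 'M[C]_2) = 1%:M.
Proof.
apply/matrixP => i j.
case: (mxtens_indexP i) => i0 i1; case: (mxtens_indexP j) => j0 j1.
rewrite tensmxE !mxE (can_eq (@mxtens_indexK _ _)) xpair_eqE.
by case: (i0 == j0); case: (i1 == j1); rewrite ?mulr1 ?mulr0.
Qed.

Definition W (n : 'rV[R]_3) : 'M[C]_(2 * 2) := (1%:M : 'M[C]_2) *t adots n.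

Lemma W_adj n : (map_mx conjc (W n))^T = W n.
Proof. by rewrite /W map_mxT trmx_tens map_mx1 trmx1 adots_adj. Qed.

Lemma WW n : dot3 n n = 1 -> W n *m W n = 1%:M.
Proof. by move=> Hn; rewrite /W tensmx_mul mul1mx adots_sq Hn scale1r tens11. Qed.

Lemma W_tens n (E F : 'M[C]_2) : W n *m (E *t F) *m W n = E *t (adots n *m F *m adots n).
Proof. by rewrite /W !tensmx_mul mul1mx mulmx1. Qed.

Lemma W_same n x : dot3 n n = 1 -> dot3 n x = 0 -> W n *m same_eff x *m W n = diff_eff x.
Proof.
move=> Hn Hx; rewrite /same_eff /diff_eff (mulmxDr (W n)) (mulmxDl _ _ (W n)).
congr (_ + _); rewrite W_tens; congr (_ *t _); exact: eff_sand.
Qed.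

Lemma W_diff n x : dot3 n n = 1 -> dot3 n x = 0 -> W n *m diff_eff x *m W n = same_eff x.
Proof.
move=> Hn Hx; rewrite /same_eff /diff_eff (mulmxDr (W n)) (mulmxDl _ _ (W n)).
congr (_ + _); rewrite W_tens; congr (_ *t _); exact: eff_sand.
Qed.

Lemma expectW n (psi : 'cV[C]_(2 * 2)) M :
  expect (W n *m psi) M = expect psi (W n *m M *m W n).
Proof. by rewrite /expect /cadj map_mxM trmx_mul W_adj !mulmxA. Qed.

Lemma unitW n (psi : 'cV[C]_(2 * 2)) : dot3 n n = 1 ->
  is_unit_vec (W n *m psi) <-> is_unit_vec psi.
Proof.
move=> Hn; rewrite /is_unit_vec /cadj map_mxM trmx_mul W_adj.
rewrite -(mulmxA _ (W n) (W n *m psi)) (mulmxA (W n)) (WW n Hn) mul1mx.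
by [].
Qed.

Lemma equiv_n (n a b : 'rV[R]_3) (eta P : R) :
  dot3 n n = 1 -> dot3 n a = 0 -> dot3 n b = 0 ->
  (exists psi : 'cV[C]_(2 * 2),
      is_unit_vec psi /\ expect psi (same_eff b) = 0 /\
      eta%:C * expect psi (same_eff a) = P%:C)
  <->
  (exists psi' : 'cV[C]_(2 * 2),
      is_unit_vec psi' /\ expect psi' (diff_eff b) = 0 /\
      eta%:C * expect psi' (diff_eff a) = P%:C).
Proof.
move=> Hn Ha Hb; split; case=> psi [U [E1 E2]]; exists (W n *m psi).
  split; first by apply/(@unitW n psi Hn).
  by split; rewrite expectW; [rewrite (W_diff n b Hn Hb) | rewrite (W_diff n a Hn Ha)].
split; first by apply/(@unitW n psi Hn).
by split; rewrite expectW; [rewrite (W_same n b Hn Hb) | rewrite (W_same n a Hn Ha)].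
Qed.

Definition mk3 (x y z : R) : 'rV[R]_3 := \row_(j < 3) nth 0 [:: x; y; z] j.

Lemma dot3_mk3 x y z v : dot3 (mk3 x y z) v = x * v 0 0 + y * v 0 1 + z * v 0 2.
Proof. by rewrite /dot3 !mxE. Qed.

Lemma unit3_dot a : unit3 a -> dot3 a a = 1.
Proof.
rewrite /unit3 => <-; rewrite /dot3 !big_ord_recr big_ord0 /= add0r -!expr2.
by congr (_ + _ + _); congr (a 0 _ ^+ 2); apply: val_inj.
Qed.

Lemma normalize m a b : dot3 m m != 0 -> dot3 m a = 0 -> dot3 m b = 0 ->
  exists n, dot3 n n = 1 /\ dot3 n a = 0 /\ dot3 n b = 0.
Proof.
move=> Hm Ha Hb; set s := dot3 m m.
have s_ge0 : 0 <= s by rewrite /s /dot3; nra.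
set k := (Num.sqrt s)^-1; exists (k *: m).
have dk v : dot3 (k *: m) v = k * dot3 m v by rewrite /dot3 !mxE; ring.
have dkk : dot3 (k *: m) (k *: m) = k ^+ 2 * s by rewrite /s /dot3 !mxE; ring.
split; last by rewrite !dk Ha Hb mulr0.
by rewrite dkk /k exprVn sqr_sqrtr // mulVf.
Qed.

Lemma sq3_eq0 (x y z : R) : x * x + y * y + z * z = 0 -> x = 0 /\ y = 0 /\ z = 0.
Proof. move=> H; split; [|split]; nra. Qed.

Lemma exists_n a b : unit3 a -> exists n, dot3 n n = 1 /\ dot3 n a = 0 /\ dot3 n b = 0.
Proof.
move=> /unit3_dot Ha.
set c := mk3 (a 0 1 * b 0 2 - a 0 2 * b 0 1) (a 0 2 * b 0 0 - a 0 0 * b 0 2)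
             (a 0 0 * b 0 1 - a 0 1 * b 0 0).
have [Hc|Hc] := eqVneq (dot3 c c) 0; last first.
  by apply: (normalize c a b Hc); rewrite !dot3_mk3 ?mxE /=; ring.
move: Hc; rewrite dot3_mk3 ?mxE /= => /sq3_eq0 [h0 [h1 h2]].
set p0 := mk3 0 (- a 0 2) (a 0 1).
set p1 := mk3 (a 0 2) 0 (- a 0 0).
set p2 := mk3 (- a 0 1) (a 0 0) 0.
have [H0|H0] := eqVneq (dot3 p0 p0) 0; last first.
  apply: (normalize p0 a b H0); rewrite !dot3_mk3 ?mxE /=.
    by ring.
  by rewrite -[RHS]h0; ring.
have [H1|H1] := eqVneq (dot3 p1 p1) 0; last first.
  apply: (normalize p1 a b H1); rewrite !dot3_mk3 ?mxE /=.
    by ring.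
  by rewrite -[RHS]h1; ring.
have [H2|H2] := eqVneq (dot3 p2 p2) 0; last first.
  apply: (normalize p2 a b H2); rewrite !dot3_mk3 ?mxE /=.
    by ring.
  by rewrite -[RHS]h2; ring.
exfalso.
have : dot3 p0 p0 + dot3 p1 p1 + dot3 p2 p2 = 2 * dot3 a a.
  by rewrite !dot3_mk3 !mxE /= /dot3; ring.
rewrite H0 H1 H2 Ha; lra.
Qed.

End S.

Theorem proposition4 (R : rcfType) (a b : 'rV[R]_3) (eta P : R) :
  unit3 a -> unit3 b -> 0 <= eta <= 1 -> 0 <= P <= 1 ->
  (exists psi : 'cV[R[i]]_(2 * 2),
      is_unit_vec psi /\ expect psi (same_eff b) = 0 /\
      eta%:C * expect psi (same_eff a) = P%:C)
  <->
  (exists psi' : 'cV[R[i]]_(2 * 2),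
      is_unit_vec psi' /\ expect psi' (diff_eff b) = 0 /\
      eta%:C * expect psi' (diff_eff a) = P%:C).
Proof.
move=> Ua _ _ _; have [n [Hn [Ha Hb]]] := @exists_n R a b Ua.
exact: equiv_n Hn Ha Hb.
Qed.
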